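(* Let $\Omega_n=\dfrac{\pi^{n/2}}{\Gamma\left(\frac n2+1\right)}$ and \[ \Psi(n)=-\frac{n+1}{2n}\ln\frac n2+\frac{n+2}{2n+2}\ln\frac{n+1}{2}-\frac{\ln 2\pi}{2n(n+1)}. \] Then for every $n\in\mathbb{N}$, \[ \Psi(n)-\frac{1}{3n^3}<\frac1n\ln\Omega_n-\frac1{n+1}\ln\Omega_{n+1}<\Psi(n)-\frac1{3n^3}+\frac1{2n^4}. \]
   Context: $\Omega_n$ is the volume of the unit ball in $\mathbb{R}^n$; $\Gamma$ is Euler's gamma function. *)

(* Defs.v *)
From Stdlib Require Import Reals.
From Coquelicot Require Import Coquelicot.
Open Scope R_scope.

Definition Gamma (s : R) : R :=
  RInt_gen (fun t => Rpower t (s - 1) * exp (- t)) (at_right 0) (Rbar_locally p_infty).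

(* Volume of the unit ball in R^n: Omega_n = pi^(n/2) / Gamma(n/2 + 1). *)
Definition Omega (n : nat) : R :=
  Rpower PI (INR n / 2) / Gamma (INR n / 2 + 1).

Definition Psi (n : R) : R :=
  - (n + 1) / (2 * n) * ln (n / 2)
  + (n + 2) / (2 * n + 2) * ln ((n + 1) / 2)
  - ln (2 * PI) / (2 * n * (n + 1)).

(* Main.v *)
Require Import Defs.
From Stdlib Require Import Reals Lra Lia Classical.
From Coquelicot Require Import Coquelicot.
Open Scope R_scope.

Lemma ball_R (x e y : R) : ball x e y <-> Rabs (y - x) < e.
Proof. reflexivity. Qed.

Lemma lim_pinfty_eps (f : R -> R) (L : R) :
  (forall eps, 0 < eps -> exists M, forall x, M < x -> Rabs (f x - L) < eps) ->
  filterlim f (Rbar_locally p_infty) (locally L).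
Proof.
  intros H P [eps HP]. destruct (H eps (cond_pos eps)) as [M HM].
  exists M. intros x Hx. apply HP. apply ball_R. now apply HM.
Qed.

Lemma at_right_01 : at_right 0 (fun a => 0 < a < 1).
Proof.
  exists (mkposreal 1 Rlt_0_1). intros y Hy Hy0. apply ball_R in Hy. simpl in Hy.
  assert (H1 : Rabs (y - 0) < 1) by exact Hy. rewrite Rminus_0_r in H1.
  apply Rabs_def2 in H1. simpl in *. lra.
Qed.

Lemma pinfty_gt1 : Rbar_locally p_infty (fun b => 1 < b).
Proof. exists 1. auto. Qed.

Lemma at_right_le_locally (x : R) : filter_le (at_right x) (locally x).
Proof. intros P HP. unfold at_right, within. apply filter_imp with (2 := HP). auto. Qed.

Lemma gen_Derive (f df : R -> R) (la lb : R) :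
  (forall x, 0 < x -> is_derive f x (df x)) ->
  (forall x, 0 < x -> continuous df x) ->
  filterlim f (at_right 0) (locally la) ->
  filterlim f (Rbar_locally p_infty) (locally lb) ->
  is_RInt_gen df (at_right 0) (Rbar_locally p_infty) (lb - la).
Proof.
  intros Hd Hc Ha Hb.
  assert (Hpos : filter_prod (at_right 0) (Rbar_locally p_infty)
     (fun ab => forall x, Rmin (fst ab) (snd ab) <= x <= Rmax (fst ab) (snd ab) -> 0 < x)).
  { apply Filter_prod with (1 := at_right_01) (2 := pinfty_gt1).
    intros a b Ha' Hb' x Hx. simpl in Hx. rewrite Rmin_left in Hx by lra. lra. }
  apply is_RInt_gen_ext with (Derive f).
  - apply Filter_prod with (1 := at_right_01) (2 := pinfty_gt1).
    intros a b Ha' Hb' x Hx. simpl in Hx. rewrite Rmin_left in Hx by lra.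
    apply is_derive_unique, Hd. lra.
  - apply is_RInt_gen_Derive; auto.
    + eapply filter_imp with (2 := Hpos). intros [a b] H x Hx.
      exists (df x). apply Hd. now apply H.
    + eapply filter_imp with (2 := Hpos). intros [a b] H x Hx.
      specialize (H x Hx).
      apply continuous_ext_loc with df.
      * apply locally_interval with 0 p_infty; simpl; auto.
        intros y Hy _. symmetry. apply is_derive_unique, Hd. exact Hy.
      * now apply Hc.
Qed.

Definition E (j : nat) (t : R) : R := sqrt t ^ j * exp (- t).

Lemma cont_pow j x : continuous (fun u : R => u ^ j) x.
Proof. apply (ex_derive_continuous (K:=R_AbsRing) (V:=R_NormedModule)). auto_derive. auto. Qed.

Lemma cont_expm x : continuous (fun u : R => exp (- u)) x.
Proof. apply (ex_derive_continuous (K:=R_AbsRing) (V:=R_NormedModule)). auto_derive. auto. Qed.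

Lemma E_cont j x : continuous (E j) x.
Proof.
  unfold E. apply (continuous_mult (fun t => sqrt t ^ j) (fun t => exp (- t))).
  - apply (continuous_comp sqrt (fun u => u ^ j)). apply continuous_sqrt. apply cont_pow.
  - apply cont_expm.
Qed.

Lemma E_ge0 j x : 0 <= E j x.
Proof. unfold E. apply Rmult_le_pos. apply pow_le, sqrt_pos. left; apply exp_pos. Qed.

Lemma E_exRInt j a b : ex_RInt (E j) a b.
Proof. apply (ex_RInt_continuous (V:=R_CompleteNormedModule)). intros; apply E_cont. Qed.

Lemma exp_ge_pow (x : R) (N : nat) : 0 <= x -> x ^ N / INR (Factorial.fact N) <= exp x.
Proof.
  intros Hx. apply Rle_trans with (2 := exp_ge_taylor x N Hx).
  destruct N as [|N].
  - simpl. lra.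
  - rewrite tech5. assert (0 <= sum_f_R0 (fun k => x ^ k / INR (Factorial.fact k)) N).
    { apply cond_pos_sum. intros k. unfold Rdiv. apply Rmult_le_pos. apply pow_le; auto.
      left. apply Rinv_0_lt_compat, INR_fact_lt_0. }
    lra.
Qed.

Lemma growth (m : nat) :
  filterlim (fun x => sqrt x ^ m * exp (- x)) (Rbar_locally p_infty) (locally 0).
Proof.
  apply lim_pinfty_eps. intros eps Heps.
  set (C := INR (Factorial.fact (S m))).
  assert (HC : 0 < C) by apply INR_fact_lt_0.
  exists (Rmax 1 (C / eps)). intros x Hx.
  assert (H1 : 1 < x) by (eapply Rle_lt_trans; [apply Rmax_l|exact Hx]).
  assert (H2 : C / eps < x) by (eapply Rle_lt_trans; [apply Rmax_r|exact Hx]).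
  rewrite Rminus_0_r.
  assert (Hs : 0 <= sqrt x <= x).
  { split. apply sqrt_pos. rewrite <- (sqrt_sqrt x) at 2 by lra.
    assert (1 <= sqrt x). { rewrite <- sqrt_1. apply sqrt_le_1_alt. lra. }
    assert (0 <= sqrt x) by apply sqrt_pos. nra. }
  assert (He := exp_ge_pow x (S m) ltac:(lra)). fold C in He.
  rewrite exp_Ropp. rewrite Rabs_right.
  2:{ apply Rle_ge, Rmult_le_pos. apply pow_le; lra. left; apply Rinv_0_lt_compat, exp_pos. }
  assert (Hxm : 0 < x ^ m) by (apply pow_lt; lra).
  assert (Hsm : sqrt x ^ m <= x ^ m) by (apply pow_incr; lra).
  assert (Hex : 0 < exp x) by apply exp_pos.
  apply Rle_lt_trans with (x ^ m / exp x).
  { unfold Rdiv. apply Rmult_le_compat_r. left; apply Rinv_0_lt_compat; auto. auto. }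
  apply Rle_lt_trans with (C / x).
  { apply (Rmult_le_reg_r (exp x * x)). nra.
    unfold Rdiv. field_simplify; try lra.
    simpl in He. apply (Rmult_le_compat_r C) in He; [|lra].
    unfold Rdiv in He. rewrite Rmult_assoc, Rinv_l in He by lra. nra. }
  apply (Rmult_lt_reg_r x). lra. unfold Rdiv. rewrite Rmult_assoc, Rinv_l by lra.
  apply (Rmult_lt_reg_r (/ eps)). apply Rinv_0_lt_compat; lra.
  replace (eps * x * / eps) with x by (field; lra). lra.
Qed.

Lemma lim_opp0 (F : (R -> Prop) -> Prop) (g : R -> R) : Filter F ->
  filterlim g F (locally 0) -> filterlim (fun x => - g x) F (locally 0).
Proof.
  intros FF H P [eps HP].
  assert (Hb : F (fun x => ball 0 eps (g x))).
  { apply H. exists eps. auto. }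
  eapply filter_imp with (2 := Hb). intros x Hx. apply HP. apply ball_R. apply ball_R in Hx.
  replace (- g x - 0) with (- (g x - 0)) by ring. rewrite Rabs_Ropp. exact Hx.
Qed.

Lemma cont_at_right (f : R -> R) (l : R) : continuous f 0 -> f 0 = l ->
  filterlim f (at_right 0) (locally l).
Proof. intros Hc <-. eapply filterlim_filter_le_1. apply at_right_le_locally. exact Hc. Qed.

Lemma Gamma0 : is_RInt_gen (E 0) (at_right 0) (Rbar_locally p_infty) 1.
Proof.
  replace 1 with (0 - (-1)) by ring.
  apply gen_Derive with (f := fun t => - exp (- t)).
  - intros x _. unfold E. auto_derive; auto. simpl. ring.
  - intros; apply E_cont.
  - apply cont_at_right. apply (ex_derive_continuous (K:=R_AbsRing) (V:=R_NormedModule)).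
    auto_derive; auto. rewrite Ropp_0, exp_0. ring.
  - apply lim_opp0. apply Rbar_locally_filter.
    eapply filterlim_ext; [|apply (growth 0)]. intros x; simpl; ring.
Qed.

Definition F1 (x : R) := RInt (E 1) 0 x.

Lemma F1_deriv x : is_derive F1 x (E 1 x).
Proof.
  apply (is_derive_RInt (E 1) F1 0 x).
  - apply filter_forall. intros b. apply (RInt_correct (V:=R_CompleteNormedModule)), E_exRInt.
  - apply E_cont.
Qed.

Lemma RInt_E0 x : RInt (E 0) 0 x = 1 - exp (- x).
Proof.
  apply is_RInt_unique.
  replace (1 - exp (- x)) with (minus (- exp (- x)) (- exp (- 0))).
  2:{ unfold minus, plus, opp; simpl. rewrite Ropp_0, exp_0. ring. }
  apply (is_RInt_derive (V:=R_CompleteNormedModule) (fun t => - exp (- t))).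
  - intros t _. unfold E. auto_derive; auto. simpl; ring.
  - intros; apply E_cont.
Qed.

Lemma RInt_E2 x : 0 <= x -> RInt (E 2) 0 x = 1 - (x + 1) * exp (- x).
Proof.
  intros Hx. apply is_RInt_unique.
  replace (1 - (x + 1) * exp (- x)) with (minus (- ((x + 1) * exp (- x))) (- ((0 + 1) * exp (- 0)))).
  2:{ unfold minus, plus, opp; simpl. rewrite Ropp_0, exp_0. ring. }
  apply (is_RInt_derive (V:=R_CompleteNormedModule) (fun t => - ((t + 1) * exp (- t)))).
  - intros t Ht. rewrite Rmin_left in Ht by lra. unfold E. auto_derive; auto.
    simpl. rewrite Rmult_1_r, sqrt_sqrt by lra. ring.
  - intros; apply E_cont.
Qed.

Lemma F1_mono x y : 0 <= x <= y -> F1 x <= F1 y.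
Proof.
  intros H. unfold F1. rewrite <- (RInt_Chasles (V:=R_CompleteNormedModule) (E 1) 0 x y) by apply E_exRInt.
  assert (0 <= RInt (E 1) x y) by (apply RInt_ge_0; [lra|apply E_exRInt|intros; apply E_ge0]).
  unfold plus; simpl. lra.
Qed.

Lemma F1_bound x : 0 <= x -> F1 x <= 2.
Proof.
  intros Hx. unfold F1.
  apply Rle_trans with (RInt (fun t => plus (E 0 t) (E 2 t)) 0 x).
  - apply RInt_le; auto. apply E_exRInt.
    apply (ex_RInt_plus (V:=R_NormedModule)); apply E_exRInt.
    intros t _. unfold E, plus; simpl. rewrite !Rmult_1_r.
    assert (0 <= sqrt t) by apply sqrt_pos. assert (0 < exp (- t)) by apply exp_pos.
    assert (sqrt t <= 1 + sqrt t * sqrt t) by nra. nra.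
  - rewrite (RInt_plus (V:=R_CompleteNormedModule)) by apply E_exRInt. unfold plus; simpl.
    rewrite RInt_E0, RInt_E2 by auto.
    assert (0 < exp (- x)) by apply exp_pos. nra.
Qed.

Lemma Gamma1 : exists L, 0 <= L /\ is_RInt_gen (E 1) (at_right 0) (Rbar_locally p_infty) L.
Proof.
  set (S := fun y => exists x, 0 <= x /\ y = F1 x).
  assert (HB : bound S). { exists 2. intros y [x [Hx ->]]. now apply F1_bound. }
  assert (HE : exists y, S y). { exists (F1 0). exists 0. split; auto; lra. }
  destruct (completeness S HB HE) as [L [HL1 HL2]].
  assert (F10 : F1 0 = 0). { unfold F1. rewrite RInt_point. reflexivity. }
  exists L. split.
  { rewrite <- F10. apply HL1. exists 0. split; auto; lra. }
  replace L with (L - 0) by ring.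
  apply gen_Derive with (f := F1).
  - intros x _. apply F1_deriv.
  - intros; apply E_cont.
  - apply cont_at_right; auto. apply (ex_derive_continuous (K:=R_AbsRing) (V:=R_NormedModule)).
    exists (E 1 0). apply F1_deriv.
  - apply lim_pinfty_eps. intros eps Heps.
    destruct (classic (exists x, 0 <= x /\ L - eps < F1 x)) as [[x0 [Hx0 Hlt]]|Hn].
    + exists x0. intros x Hx.
      assert (F1 x0 <= F1 x) by (apply F1_mono; lra).
      assert (F1 x <= L) by (apply HL1; exists x; split; auto; lra).
      rewrite Rabs_left1 by lra. lra.
    + exfalso. assert (L <= L - eps); [|lra].
      apply HL2. intros y [x [Hx ->]].
      apply Rnot_lt_le. intros Hc. apply Hn. exists x. auto.
Qed.

Lemma Gamma_rec (j : nat) (L : R) :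
  is_RInt_gen (E j) (at_right 0) (Rbar_locally p_infty) L ->
  is_RInt_gen (E (S (S j))) (at_right 0) (Rbar_locally p_infty) ((INR j / 2 + 1) * L).
Proof.
  intros HL. set (c := INR j / 2 + 1).
  set (df := fun t => E (S (S j)) t - c * E j t).
  assert (H1 : is_RInt_gen df (at_right 0) (Rbar_locally p_infty) (0 - 0)).
  { apply gen_Derive with (f := fun t => - (sqrt t ^ (S (S j)) * exp (- t))).
    - intros t Ht. unfold df, E, c. auto_derive. auto.
      change (match j with | 0%nat => 1 | S _ => INR j + 1 end) with (INR (S j)).
      rewrite S_INR. simpl.
      assert (0 < sqrt t) by (apply sqrt_lt_R0; auto). field. lra.
    - intros t _. unfold df.
      apply (continuous_minus (K:=R_AbsRing) (V:=R_NormedModule)). apply E_cont.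
      apply (continuous_scal (K:=R_AbsRing) (V:=R_NormedModule) (fun _ => c) (E j)).
      apply continuous_const. apply E_cont.
    - apply cont_at_right.
      + apply (continuous_opp (K:=R_AbsRing) (V:=R_NormedModule) (fun t => sqrt t ^ S (S j) * exp (- t))).
        apply E_cont.
      + rewrite sqrt_0. simpl. ring.
    - apply lim_opp0. apply Rbar_locally_filter. apply growth. }
  assert (H2 := is_RInt_gen_scal (V:=R_NormedModule) (E j) c L HL).
  assert (H3 := is_RInt_gen_plus (V:=R_NormedModule) _ _ _ _ H1 H2).
  replace (c * L) with (plus (0 - 0) (scal c L)) by (unfold plus, scal; simpl; unfold mult; simpl; ring).
  apply is_RInt_gen_ext with (2 := H3).
  apply filter_forall. intros ab x _. unfold df, plus, scal; simpl; unfold mult; simpl. ring.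
Qed.

Lemma eventually_INR_gt (M : R) : eventually (fun n => M < INR n).
Proof. apply is_lim_seq_INR. exists M. auto. Qed.

Lemma seq_of_gen (f : R -> R) (L : R) :
  is_RInt_gen f (at_right 0) (Rbar_locally p_infty) L ->
  is_lim_seq (fun m => RInt f (/ (INR m + 1)) (INR m + 1)) L.
Proof.
  intros H P HP.
  destruct (H P HP) as [Q1 Q2 [eps He] [M HM] HQ].
  destruct (eventually_INR_gt (Rmax M (/ eps))) as [N HN].
  exists N. intros n Hn. specialize (HN n Hn).
  assert (HM' : M < INR n + 1) by (pose proof (Rmax_l M (/ eps)); lra).
  assert (He' : / eps < INR n + 1) by (pose proof (Rmax_r M (/ eps)); lra).
  assert (Hpos : 0 < INR n + 1) by (pose proof (pos_INR n); lra).
  destruct (HQ (/ (INR n + 1)) (INR n + 1)) as [y [Hy Py]].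
  - apply He.
    + apply ball_R. rewrite Rminus_0_r. rewrite Rabs_right.
      2:{ left; apply Rinv_0_lt_compat; lra. }
      assert (0 < eps) by apply cond_pos.
      apply (Rmult_lt_reg_r (INR n + 1)); auto. rewrite Rinv_l by lra.
      apply (Rmult_lt_reg_l (/ eps)). apply Rinv_0_lt_compat; lra.
      rewrite <- Rmult_assoc, Rinv_l by lra. lra.
    + apply Rinv_0_lt_compat; lra.
  - apply HM. exact HM'.
  - simpl in Hy. apply (is_RInt_unique (V:=R_CompleteNormedModule)) in Hy. rewrite Hy. exact Py.
Qed.

Lemma quad_disc (A B C : R) : 0 <= A ->
  (forall l, 0 <= A * l * l + 2 * B * l + C) -> B * B <= A * C.
Proof.
  intros HA H. destruct (Req_dec A 0) as [HA0|HA0].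
  - subst A. destruct (Req_dec B 0) as [HB|HB].
    + subst; lra.
    + exfalso. specialize (H (- (C + 1) / (2 * B))).
      replace (0 * (- (C + 1) / (2 * B)) * (- (C + 1) / (2 * B)) + 2 * B * (- (C + 1) / (2 * B)) + C)
        with (-1) in H by (field; auto). lra.
  - specialize (H (- B / A)).
    replace (A * (- B / A) * (- B / A) + 2 * B * (- B / A) + C) with ((A * C - B * B) / A) in H
      by (field; auto).
    assert (0 < A) by lra.
    apply Rmult_le_compat_r with (r := A) in H; [|lra].
    unfold Rdiv in H. rewrite Rmult_assoc, Rinv_l in H by lra. lra.
Qed.

Lemma CS_finite (j : nat) (a b : R) : a <= b ->
  RInt (E (S j)) a b * RInt (E (S j)) a b <= RInt (E j) a b * RInt (E (S (S j))) a b.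
Proof.
  intros Hab. apply quad_disc.
  { apply RInt_ge_0; auto. apply E_exRInt. intros; apply E_ge0. }
  intros l.
  assert (Hq : RInt (fun t => E j t * (l + sqrt t) * (l + sqrt t)) a b =
     RInt (E j) a b * l * l + 2 * RInt (E (S j)) a b * l + RInt (E (S (S j))) a b).
  { transitivity (RInt (fun t => plus (scal (l * l) (E j t)) (plus (scal (2 * l) (E (S j) t)) (E (S (S j)) t))) a b).
    - apply RInt_ext. intros x _. unfold plus, scal; simpl; unfold mult; simpl. unfold E. simpl. ring.
    - rewrite (RInt_plus (V:=R_CompleteNormedModule)).
      rewrite (RInt_plus (V:=R_CompleteNormedModule)).
      rewrite !(RInt_scal (V:=R_CompleteNormedModule)) by apply E_exRInt.
      unfold plus, scal; simpl; unfold mult; simpl. ring.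
      apply (ex_RInt_scal (V:=R_NormedModule)), E_exRInt. apply E_exRInt.
      apply (ex_RInt_scal (V:=R_NormedModule)), E_exRInt.
      apply (ex_RInt_plus (V:=R_NormedModule)). apply (ex_RInt_scal (V:=R_NormedModule)), E_exRInt. apply E_exRInt. }
  rewrite <- Hq. apply RInt_ge_0; auto.
  - apply (ex_RInt_continuous (V:=R_CompleteNormedModule)). intros z _.
    apply (continuous_mult (K:=R_AbsRing)). apply (continuous_mult (K:=R_AbsRing)). apply E_cont.
    apply (continuous_plus (K:=R_AbsRing) (V:=R_NormedModule)). apply continuous_const. apply continuous_sqrt.
    apply (continuous_plus (K:=R_AbsRing) (V:=R_NormedModule)). apply continuous_const. apply continuous_sqrt.
  - intros x _. rewrite Rmult_assoc. apply Rmult_le_pos. apply E_ge0. apply Rle_0_sqr.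
Qed.

Lemma CS_lim (j : nat) (A B C : R) :
  is_RInt_gen (E j) (at_right 0) (Rbar_locally p_infty) A ->
  is_RInt_gen (E (S j)) (at_right 0) (Rbar_locally p_infty) B ->
  is_RInt_gen (E (S (S j))) (at_right 0) (Rbar_locally p_infty) C ->
  B * B <= A * C.
Proof.
  intros HA HB HC.
  apply seq_of_gen in HA. apply seq_of_gen in HB. apply seq_of_gen in HC.
  assert (H1 := is_lim_seq_mult' _ _ _ _ HB HB).
  assert (H2 := is_lim_seq_mult' _ _ _ _ HA HC).
  assert (H := is_lim_seq_le _ _ _ _ (fun m => CS_finite j (/ (INR m + 1)) (INR m + 1) ltac:(
     assert (0 <= INR m) by apply pos_INR;
     assert (/ (INR m + 1) <= 1) by (rewrite <- Rinv_1; apply Rinv_le_contravar; lra); lra)) H1 H2).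
  exact H.
Qed.

Lemma gen_unique (f : R -> R) (L1 L2 : R) :
  is_RInt_gen f (at_right 0) (Rbar_locally p_infty) L1 ->
  is_RInt_gen f (at_right 0) (Rbar_locally p_infty) L2 -> L1 = L2.
Proof.
  intros H1 H2. apply (is_RInt_gen_unique (V:=R_CompleteNormedModule)) in H1.
  apply (is_RInt_gen_unique (V:=R_CompleteNormedModule)) in H2. congruence.
Qed.

Lemma E_exists (j : nat) : exists L, is_RInt_gen (E j) (at_right 0) (Rbar_locally p_infty) L.
Proof.
  induction j as [j IH] using (well_founded_induction Wf_nat.lt_wf).
  destruct j as [|[|j]].
  - exists 1. apply Gamma0.
  - destruct Gamma1 as [L [_ HL]]. eauto.
  - destruct (IH j) as [L HL]. lia. eexists. apply Gamma_rec, HL.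
Qed.

Definition Gm (j : nat) : R := Gamma (INR j / 2 + 1).

Lemma Gm_is (j : nat) : is_RInt_gen (E j) (at_right 0) (Rbar_locally p_infty) (Gm j).
Proof.
  destruct (E_exists j) as [L HL].
  replace (Gm j) with L; auto.
  unfold Gm, Gamma. symmetry. apply (is_RInt_gen_unique (V:=R_CompleteNormedModule)).
  apply is_RInt_gen_ext with (2 := HL).
  apply Filter_prod with (1 := at_right_01) (2 := pinfty_gt1).
  intros a b Ha Hb x Hx. simpl in Hx. rewrite Rmin_left in Hx by lra.
  assert (Hx0 : 0 < x) by lra. unfold E. f_equal.
  replace (INR j / 2 + 1 - 1) with (/ 2 * INR j) by field.
  rewrite <- Rpower_mult, Rpower_sqrt by auto. rewrite Rpower_pow. auto.
  apply sqrt_lt_R0; auto.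
Qed.

Lemma Gm_0 : Gm 0 = 1.
Proof. apply (gen_unique (E 0)). apply Gm_is. apply Gamma0. Qed.

Lemma Gm_rec (j : nat) : Gm (S (S j)) = (INR j / 2 + 1) * Gm j.
Proof. apply (gen_unique (E (S (S j)))). apply Gm_is. apply Gamma_rec, Gm_is. Qed.

Lemma Gm_1_ge0 : 0 <= Gm 1.
Proof.
  destruct Gamma1 as [L [HL1 HL]]. replace (Gm 1) with L; auto.
  apply (gen_unique (E 1)); auto. apply Gm_is.
Qed.

Lemma Gm_CS (j : nat) : Gm (S j) * Gm (S j) <= Gm j * Gm (S (S j)).
Proof. apply (CS_lim j); apply Gm_is. Qed.

Lemma Gm_pos (j : nat) : 0 < Gm j.
Proof.
  assert (H1 : 0 < Gm 1).
  { assert (H := Gm_CS 1). rewrite (Gm_rec 1), (Gm_rec 0), Gm_0 in H.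
    simpl in H. destruct Gm_1_ge0 as [|H0]; auto. rewrite <- H0 in H. lra. }
  induction j as [j IH] using (well_founded_induction Wf_nat.lt_wf).
  destruct j as [|[|j]].
  - rewrite Gm_0; lra.
  - auto.
  - rewrite Gm_rec. apply Rmult_lt_0_compat. pose proof (pos_INR j). lra. apply IH. lia.
Qed.

Definition Iw (m : nat) : R := RInt (fun x => sin x ^ m) 0 (PI / 2).

Lemma sinpow_cont m x : continuous (fun x => sin x ^ m) x.
Proof. apply (ex_derive_continuous (K:=R_AbsRing) (V:=R_NormedModule)). auto_derive. auto. Qed.

Lemma sinpow_ex m a b : ex_RInt (fun x => sin x ^ m) a b.
Proof. apply (ex_RInt_continuous (V:=R_CompleteNormedModule)). intros; apply sinpow_cont. Qed.

Lemma PI2_pos : 0 < PI / 2.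
Proof. pose proof PI_RGT_0. lra. Qed.

Lemma I_rec m : (INR m + 2) * Iw (S (S m)) = (INR m + 1) * Iw m.
Proof.
  set (df := fun x => (INR m + 2) * sin x ^ (S (S m)) - (INR m + 1) * sin x ^ m).
  assert (H : is_RInt df 0 (PI / 2) (minus (- (cos (PI/2) * sin (PI/2) ^ (S m))) (- (cos 0 * sin 0 ^ (S m))))).
  { apply (is_RInt_derive (V:=R_CompleteNormedModule) (fun x => - (cos x * sin x ^ (S m)))).
    - intros x _. unfold df. auto_derive; auto.
      change (match m with | 0%nat => 1 | S _ => INR m + 1 end) with (INR (S m)).
      rewrite S_INR. simpl. pose proof (sin2_cos2 x) as Hc. unfold Rsqr in Hc.
      replace (cos x * (1 * cos x * ((INR m + 1) * sin x ^ m))) with ((cos x * cos x) * ((INR m + 1) * sin x ^ m)) by ring.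
      replace (cos x * cos x) with (1 - sin x * sin x) by lra. ring.
    - intros x _. unfold df. apply (ex_derive_continuous (K:=R_AbsRing) (V:=R_NormedModule)). auto_derive. auto. }
  rewrite cos_PI2, sin_0, cos_0 in H.
  apply (is_RInt_unique (V:=R_CompleteNormedModule)) in H.
  unfold df in H.
  rewrite (RInt_minus (V:=R_CompleteNormedModule)) in H.
  2,3: apply (ex_RInt_scal (V:=R_NormedModule)); apply sinpow_ex.
  rewrite !(RInt_scal (V:=R_CompleteNormedModule)) in H by apply sinpow_ex.
  unfold minus, plus, opp, scal in H; simpl in H; unfold mult in H; simpl in H.
  unfold Iw; simpl. lra.
Qed.

Lemma I_0 : Iw 0 = PI / 2.
Proof.
  unfold Iw. simpl. rewrite (RInt_const (V:=R_CompleteNormedModule)).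
  unfold scal; simpl; unfold mult; simpl. ring.
Qed.

Lemma I_1 : Iw 1 = 1.
Proof.
  unfold Iw. apply (is_RInt_unique (V:=R_CompleteNormedModule)).
  replace 1 with (minus (- cos (PI / 2)) (- cos 0)).
  2:{ rewrite cos_PI2, cos_0. unfold minus, plus, opp; simpl. ring. }
  apply (is_RInt_derive (V:=R_CompleteNormedModule) (fun x => - cos x)).
  - intros x _. auto_derive; auto. simpl. ring.
  - intros; apply sinpow_cont.
Qed.

Lemma sin_01 x : 0 <= x <= PI / 2 -> 0 <= sin x <= 1.
Proof.
  intros H. split. apply sin_ge_0; pose proof PI_RGT_0; lra. apply SIN_bound.
Qed.

Lemma I_mono m : Iw (S m) <= Iw m.
Proof.
  unfold Iw. apply RInt_le. left; apply PI2_pos. apply sinpow_ex. apply sinpow_ex.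
  intros x Hx. destruct (sin_01 x) as [H1 H2]. lra.
  simpl. assert (0 <= sin x ^ m) by (apply pow_le; auto). nra.
Qed.

Lemma I_ge0 m : 0 <= Iw m.
Proof.
  unfold Iw. apply RInt_ge_0. left; apply PI2_pos. apply sinpow_ex.
  intros x Hx. apply pow_le. apply sin_01. lra.
Qed.

Lemma I_prod m : (INR m + 1) * Iw m * Iw (S m) = PI / 2.
Proof.
  induction m.
  - rewrite I_0, I_1. simpl. ring.
  - rewrite S_INR. replace ((INR m + 1 + 1) * Iw (S m) * Iw (S (S m))) with (Iw (S m) * ((INR m + 2) * Iw (S (S m)))) by ring.
    rewrite I_rec. rewrite <- IHm. ring.
Qed.

Lemma I_prod' m : Iw m * Iw (S m) = PI / (2 * (INR m + 1)).
Proof.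
  assert (H := I_prod m). assert (0 <= INR m) by apply pos_INR.
  apply (Rmult_eq_reg_l (INR m + 1)); [|lra].
  rewrite <- Rmult_assoc, H. field. lra.
Qed.

Lemma I_sq m : (1 <= m)%nat -> PI / (2 * (INR m + 1)) <= Iw m * Iw m <= PI / (2 * INR m).
Proof.
  intros Hm. assert (H1 : 1 <= INR m) by (apply (le_INR 1); auto).
  split.
  - rewrite <- I_prod'. apply Rmult_le_compat_l. apply I_ge0. apply I_mono.
  - destruct m as [|m]. lia.
    rewrite S_INR. rewrite <- I_prod'. rewrite (Rmult_comm (Iw m)).
    apply Rmult_le_compat_l. apply I_ge0. apply I_mono.
Qed.

Lemma Gm_even_rec k : Gm (2 * S k) = (INR k + 1) * Gm (2 * k).
Proof.
  replace (2 * S k)%nat with (S (S (2 * k))) by lia. rewrite Gm_rec, mult_INR. simpl. field.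
Qed.

Lemma Gm_4_rec k : Gm (4 * S k) = (2 * INR k + 2) * (2 * INR k + 1) * Gm (4 * k).
Proof.
  replace (4 * S k)%nat with (S (S (S (S (4 * k))))) by lia. rewrite Gm_rec, Gm_rec.
  rewrite !S_INR, mult_INR. simpl. field.
Qed.

Lemma I_even k : Iw (2 * k) * (4 ^ k * (Gm (2 * k) * Gm (2 * k))) = PI / 2 * Gm (4 * k).
Proof.
  induction k.
  - simpl. rewrite I_0, Gm_0. ring.
  - assert (A : (2 * INR k + 2) * Iw (2 * S k) = (2 * INR k + 1) * Iw (2 * k)).
    { replace (2 * S k)%nat with (S (S (2 * k))) by lia. assert (H := I_rec (2 * k)). rewrite mult_INR in H. replace (INR 2) with 2 in H by (simpl; ring). lra. }
    rewrite Gm_even_rec, Gm_4_rec.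
    transitivity (2 * (INR k + 1) * ((2 * INR k + 2) * Iw (2 * S k)) * (4 ^ k * (Gm (2 * k) * Gm (2 * k)))).
    { simpl. ring. }
    rewrite A.
    transitivity (2 * (INR k + 1) * (2 * INR k + 1) * (Iw (2 * k) * (4 ^ k * (Gm (2 * k) * Gm (2 * k))))).
    { ring. }
    rewrite IHk. ring.
Qed.

Definition w (k : nat) : R := Gm (4 * k) / (4 ^ k * (Gm (2 * k) * Gm (2 * k))).

Lemma wallis k : (1 <= k)%nat -> 2 * INR k / (2 * INR k + 1) <= PI * INR k * (w k * w k) <= 1.
Proof.
  intros Hk. assert (H1 : 1 <= INR k) by (apply (le_INR 1); auto).
  assert (HG := Gm_pos (2 * k)). assert (H4 : 0 < 4 ^ k) by (apply pow_lt; lra).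
  assert (HD : 0 < 4 ^ k * (Gm (2 * k) * Gm (2 * k))) by (apply Rmult_lt_0_compat; nra).
  assert (Hw : Iw (2 * k) = PI / 2 * w k).
  { unfold w. apply (Rmult_eq_reg_r (4 ^ k * (Gm (2 * k) * Gm (2 * k)))); [|lra].
    rewrite I_even. field. lra. }
  assert (Hs := I_sq (2 * k) ltac:(lia)). rewrite Hw, mult_INR in Hs. simpl in Hs.
  pose proof PI_RGT_0.
  destruct Hs as [Hs1 Hs2]. split.
  - apply (Rmult_le_reg_r (PI / (4 * INR k))). apply Rdiv_lt_0_compat; lra.
    replace (PI * INR k * (w k * w k) * (PI / (4 * INR k))) with (PI / 2 * w k * (PI / 2 * w k)) by (field; lra).
    eapply Rle_trans; [|exact Hs1]. right. field. lra.
  - apply (Rmult_le_reg_r (PI / (4 * INR k))). apply Rdiv_lt_0_compat; lra.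
    replace (PI * INR k * (w k * w k) * (PI / (4 * INR k))) with (PI / 2 * w k * (PI / 2 * w k)) by (field; lra).
    eapply Rle_trans; [exact Hs2|]. right. field. lra.
Qed.

Lemma mono_from_deriv (f df : R -> R) (y : R) : 0 <= y ->
  (forall t, 0 <= t <= y -> is_derive f t (df t)) ->
  (forall t, 0 <= t <= y -> 0 <= df t) -> f 0 <= f y.
Proof.
  intros Hy Hd Hp.
  destruct (MVT_gen f 0 y df) as [c [Hc Heq]].
  - intros x Hx. rewrite Rmin_left, Rmax_right in Hx by lra. apply Hd. lra.
  - intros x Hx. rewrite Rmin_left, Rmax_right in Hx by lra.
    apply continuity_pt_filterlim. apply (ex_derive_continuous (K:=R_AbsRing) (V:=R_NormedModule)).
    exists (df x). apply Hd. lra.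
  - rewrite Rmin_left, Rmax_right in Hc by lra.
    assert (0 <= df c) by (apply Hp; lra). nra.
Qed.

Lemma atanh_lo y : 0 <= y < 1 -> 2 * (y + y ^ 3 / 3 + y ^ 5 / 5) <= ln (1 + y) - ln (1 - y).
Proof.
  intros Hy.
  set (f := fun t => ln (1 + t) - ln (1 - t) - 2 * (t + t ^ 3 / 3 + t ^ 5 / 5)).
  assert (H := mono_from_deriv f (fun t => 2 * t ^ 6 / (1 - t ^ 2)) y ltac:(lra)).
  assert (f 0 = 0). { unfold f. replace (1+0) with 1 by ring. replace (1-0) with 1 by ring. rewrite ln_1. field. }
  cut (0 <= f y). { unfold f. lra. }
  rewrite <- H0. apply H.
  - intros t Ht. unfold f. auto_derive. lra. field. nra. 
  - intros t Ht. apply Rmult_le_pos. apply Rmult_le_pos. lra. apply pow_le; lra.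
    left. apply Rinv_0_lt_compat. nra.
Qed.

Lemma atanh_hi y : 0 <= y < 1 -> ln (1 + y) - ln (1 - y) <= 2 * (y + y ^ 3 / 3 + y ^ 5 / 5 + y ^ 7 / (7 * (1 - y ^ 2))).
Proof.
  intros Hy.
  set (f := fun t => 2 * (t + t ^ 3 / 3 + t ^ 5 / 5 + t ^ 7 / (7 * (1 - t ^ 2))) - (ln (1 + t) - ln (1 - t))).
  assert (H := mono_from_deriv f (fun t => 4 * t ^ 8 / (7 * (1 - t ^ 2) ^ 2)) y ltac:(lra)).
  assert (f 0 = 0). { unfold f. replace (1+0) with 1 by ring. replace (1-0) with 1 by ring. rewrite ln_1. field. }
  cut (0 <= f y). { unfold f. lra. }
  rewrite <- H0. apply H.
  - intros t Ht. unfold f. auto_derive. repeat split; try lra; nra. field. nra.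
  - intros t Ht. apply Rmult_le_pos. apply Rmult_le_pos. lra. apply pow_le; lra.
    left. apply Rinv_0_lt_compat. assert (0 < 1 - t ^ 2) by nra. apply Rmult_lt_0_compat. lra. apply pow_lt. auto.
Qed.

Definition hlo (x : R) : R := 1 / (12 * x) - 1 / (360 * x ^ 3).
Definition hhi (x : R) : R := hlo x + 1 / (1260 * x ^ 5).
Definition gg (x : R) : R := (x + 1 / 2) * ln (1 + 1 / x) - 1.

Ltac horner_pos := match goal with
 | |- 0 <= ?c + ?t * ?r => apply Rplus_le_le_0_compat; [lra | apply Rmult_le_pos; [lra | horner_pos]]
 | |- _ => lra end.

Lemma nonneg_of_mul (e D N : R) : 0 < D -> e * D = N -> 0 <= N -> 0 <= e.
Proof.
  intros HD HeN HN. subst N. destruct (Rle_or_lt 0 e); auto.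
  assert (e * D < 0) by (apply Rmult_neg_pos; auto). lra.
Qed.

Lemma P1 x : 1 / 2 <= x ->
  0 <= (/ (2 * x + 1)) ^ 2 / 3 + (/ (2 * x + 1)) ^ 4 / 5 - (hlo x - hlo (x + 1)).
Proof.
  intros Hx. set (t := x - 1 / 2). assert (Ht : 0 <= t) by (unfold t; lra).
  apply nonneg_of_mul with (D := x ^ 3 * (x + 1) ^ 3 * (2 * x + 1) ^ 4 * 2880)
    (N := 119 + t * (416 + t * (528 + t * (320 + t * (80))))).
  - repeat apply Rmult_lt_0_compat; try apply pow_lt; lra.
  - unfold hlo, t. field. lra.
  - horner_pos.
Qed.

Lemma P2 x : 1 / 2 <= x ->
  0 <= (hhi x - hhi (x + 1)) - ((/ (2 * x + 1)) ^ 2 / 3 + (/ (2 * x + 1)) ^ 4 / 5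
         + (/ (2 * x + 1)) ^ 6 / (7 * (1 - (/ (2 * x + 1)) ^ 2))).
Proof.
  intros Hx. set (t := x - 1 / 2). assert (Ht : 0 <= t) by (unfold t; lra).
  apply nonneg_of_mul with (D := x ^ 5 * (x + 1) ^ 5 * (2 * x + 1) ^ 4 * 161280)
    (N := 9917 + t * (60616 + t * (153636 + t * (206784 + t * (156016 + t * (62592 + t * (10432))))))).
  - repeat apply Rmult_lt_0_compat; try apply pow_lt; lra.
  - replace (1 - (/ (2 * x + 1)) ^ 2) with (4 * x * (x + 1) / (2 * x + 1) ^ 2) by (field; lra).
    unfold hhi, hlo, t. field. lra.
  - horner_pos.
Qed.

Lemma gg_lo x : 1 / 2 <= x -> hlo x - hlo (x + 1) <= gg x.
Proof.
  intros Hx. set (y := / (2 * x + 1)).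
  assert (Hy : 0 < y <= 1 / 2).
  { unfold y. split. apply Rinv_0_lt_compat; lra.
    apply (Rmult_le_reg_r (2 * x + 1)); [lra|]. rewrite Rinv_l by lra. lra. }
  assert (Hl : ln (1 + 1 / x) = ln (1 + y) - ln (1 - y)).
  { rewrite <- ln_div by lra. f_equal. unfold y. field. lra. }
  assert (Hxy : x + 1 / 2 = 1 / (2 * y)) by (unfold y; field; lra).
  assert (HA := atanh_lo y ltac:(lra)).
  assert (HP := P1 x Hx). fold y in HP.
  unfold gg. rewrite Hl, Hxy.
  assert (1 / (2 * y) * (ln (1 + y) - ln (1 - y)) >= 1 / (2 * y) * (2 * (y + y ^ 3 / 3 + y ^ 5 / 5))).
  { apply Rle_ge, Rmult_le_compat_l; auto. left; apply Rdiv_lt_0_compat; lra. }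
  replace (1 / (2 * y) * (2 * (y + y ^ 3 / 3 + y ^ 5 / 5))) with (1 + y ^ 2 / 3 + y ^ 4 / 5) in H by (field; lra).
  lra.
Qed.

Lemma gg_hi x : 1 / 2 <= x -> gg x <= hhi x - hhi (x + 1).
Proof.
  intros Hx. set (y := / (2 * x + 1)).
  assert (Hy : 0 < y <= 1 / 2).
  { unfold y. split. apply Rinv_0_lt_compat; lra.
    apply (Rmult_le_reg_r (2 * x + 1)); [lra|]. rewrite Rinv_l by lra. lra. }
  assert (Hl : ln (1 + 1 / x) = ln (1 + y) - ln (1 - y)).
  { rewrite <- ln_div by lra. f_equal. unfold y. field. lra. }
  assert (Hxy : x + 1 / 2 = 1 / (2 * y)) by (unfold y; field; lra).
  assert (HA := atanh_hi y ltac:(lra)).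
  assert (HP := P2 x Hx). fold y in HP.
  unfold gg. rewrite Hl, Hxy.
  assert (1 / (2 * y) * (ln (1 + y) - ln (1 - y)) <= 1 / (2 * y) * (2 * (y + y ^ 3 / 3 + y ^ 5 / 5 + y ^ 7 / (7 * (1 - y ^ 2))))).
  { apply Rmult_le_compat_l; auto. left; apply Rdiv_lt_0_compat; lra. }
  replace (1 / (2 * y) * (2 * (y + y ^ 3 / 3 + y ^ 5 / 5 + y ^ 7 / (7 * (1 - y ^ 2)))))
    with (1 + y ^ 2 / 3 + y ^ 4 / 5 + y ^ 6 / (7 * (1 - y ^ 2))) in H.
  2:{ assert (y ^ 2 < 1) by nra. field. repeat split; lra. }
  lra.
Qed.

Definition mu (j : nat) : R :=
  ln (Gm j) - (INR j / 2 + / 2) * ln (INR j / 2) + INR j / 2 - ln (2 * PI) / 2.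

Lemma ln_le_sub1 x : 0 < x -> ln x <= x - 1.
Proof.
  intros Hx. destruct (Req_dec (ln x) 0) as [H|H].
  - rewrite H. rewrite <- ln_1 in H. apply ln_inv in H; lra.
  - pose proof (exp_ineq1 _ H). rewrite exp_ln in H0 by auto. lra.
Qed.

Lemma ln_ge_1_sub x : 0 < x -> 1 - / x <= ln x.
Proof.
  intros Hx. pose proof (ln_le_sub1 (/ x) ltac:(apply Rinv_0_lt_compat; auto)).
  rewrite ln_Rinv in H by auto. lra.
Qed.

Lemma squeeze0 (u : nat -> R) (C : R) :
  (forall n, Rabs (u n) <= C / (INR n + 1)) -> is_lim_seq u 0.
Proof.
  intros H. apply is_lim_seq_spec. intros eps.
  destruct (eventually_INR_gt (Rabs C / eps)) as [N HN]. exists N. intros n Hn.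
  specialize (HN n Hn). rewrite Rminus_0_r.
  assert (Hn1 : 0 < INR n + 1) by (pose proof (pos_INR n); lra).
  assert (He : 0 < eps) by apply cond_pos.
  eapply Rle_lt_trans. apply H.
  apply Rle_lt_trans with (Rabs C / (INR n + 1)).
  { unfold Rdiv. apply Rmult_le_compat_r. left; apply Rinv_0_lt_compat; auto. apply RRle_abs. }
  apply (Rmult_lt_reg_r (INR n + 1)); auto. unfold Rdiv. rewrite Rmult_assoc, Rinv_l by lra.
  rewrite Rmult_1_r.
  assert (Rabs C < eps * INR n). 
  { apply (Rmult_lt_reg_r (/ eps)). apply Rinv_0_lt_compat; auto.
    replace (eps * INR n * / eps) with (INR n) by (field; lra). exact HN. }
  nra.
Qed.

Lemma h_bounds x : 1 / 2 <= x -> 0 <= hlo x /\ hlo x <= hhi x /\ hhi x <= 1 / x.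
Proof.
  intros Hx. assert (Hx0 : 0 < x) by lra.
  assert (H2 : 1/4 <= x ^ 2) by nra.
  assert (H4 : 1/16 <= x ^ 4) by (replace (x ^ 4) with (x ^ 2 * x ^ 2) by ring; nra).
  split; [|split].
  - apply nonneg_of_mul with (D := 360 * x ^ 3) (N := 30 * x ^ 2 - 1).
    apply Rmult_lt_0_compat. lra. apply pow_lt; lra.
    unfold hlo. field. lra. lra.
  - unfold hhi. assert (0 < 1 / (1260 * x ^ 5)).
    { apply Rdiv_lt_0_compat. lra. apply Rmult_lt_0_compat. lra. apply pow_lt; lra. } lra.
  - cut (0 <= 1 / x - hhi x). lra.
    apply nonneg_of_mul with (D := 2520 * x ^ 5) (N := 2310 * x ^ 4 + 7 * x ^ 2 - 2).
    apply Rmult_lt_0_compat. lra. apply pow_lt; lra.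
    unfold hhi, hlo. field. lra. lra.
Qed.

Lemma INR_half_pos j : (1 <= j)%nat -> 1 / 2 <= INR j / 2.
Proof. intros H. apply (le_INR 1) in H. simpl in H. lra. Qed.

Lemma mu_step j : (1 <= j)%nat -> mu j - mu (S (S j)) = gg (INR j / 2).
Proof.
  intros Hj. assert (Hx := INR_half_pos j Hj). set (x := INR j / 2) in *.
  assert (HS : INR (S (S j)) / 2 = x + 1) by (unfold x; rewrite !S_INR; field).
  unfold mu, gg. rewrite HS. fold x. rewrite Gm_rec. fold x.
  rewrite (ln_mult (x + 1) (Gm j)) by (try lra; apply Gm_pos).
  replace (1 + 1 / x) with ((x + 1) / x) by (field; lra).
  rewrite ln_div by lra. field.
Qed.

Definition dlo (j : nat) : R := mu j - hlo (INR j / 2).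
Definition ehi (j : nat) : R := hhi (INR j / 2) - mu j.

Lemma dlo_step j : (1 <= j)%nat -> dlo (S (S j)) <= dlo j.
Proof.
  intros Hj. unfold dlo. assert (H := mu_step j Hj). assert (H2 := gg_lo _ (INR_half_pos j Hj)).
  replace (INR (S (S j)) / 2) with (INR j / 2 + 1) by (rewrite !S_INR; field). lra.
Qed.

Lemma ehi_step j : (1 <= j)%nat -> ehi (S (S j)) <= ehi j.
Proof.
  intros Hj. unfold ehi. assert (H := mu_step j Hj). assert (H2 := gg_hi _ (INR_half_pos j Hj)).
  replace (INR (S (S j)) / 2) with (INR j / 2 + 1) by (rewrite !S_INR; field). lra.
Qed.

Lemma dlo_iter j N : (1 <= j)%nat -> dlo (j + 2 * N) <= dlo j.
Proof.
  intros Hj. induction N. rewrite Nat.add_0_r; lra.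
  replace (j + 2 * S N)%nat with (S (S (j + 2 * N))) by lia.
  eapply Rle_trans; [apply dlo_step; lia|auto].
Qed.

Lemma ehi_iter j N : (1 <= j)%nat -> ehi (j + 2 * N) <= ehi j.
Proof.
  intros Hj. induction N. rewrite Nat.add_0_r; lra.
  replace (j + 2 * S N)%nat with (S (S (j + 2 * N))) by lia.
  eapply Rle_trans; [apply ehi_step; lia|auto].
Qed.

Definition u (k : nat) : R := mu (2 * k + 2).

Lemma hlo_lim : is_lim_seq (fun k => hlo (INR k + 1)) 0.
Proof.
  apply squeeze0 with 1. intros n. pose proof (pos_INR n).
  destruct (h_bounds (INR n + 1)) as [H1 [H2 H3]]. lra.
  rewrite Rabs_right by lra. lra.
Qed.

Lemma u_conv : exists D : R, is_lim_seq u D.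
Proof.
  set (dd := fun k => dlo (2 * k + 2)).
  assert (Hdec : forall k, dd (S k) <= dd k).
  { intros k. unfold dd. replace (2 * S k + 2)%nat with (S (S (2 * k + 2))) by lia. apply dlo_step. lia. }
  assert (Hlow : forall k, - ehi 2 <= dd k).
  { intros k. unfold dd. assert (He := ehi_iter 2 k ltac:(lia)).
    replace (2 + 2 * k)%nat with (2 * k + 2)%nat in He by lia.
    assert (Hh := h_bounds (INR (2 * k + 2) / 2) (INR_half_pos (2 * k + 2) ltac:(lia))).
    unfold dlo, ehi in *. lra. }
  destruct (ex_finite_lim_seq_decr dd (- ehi 2) Hdec Hlow) as [D HD].
  exists (D + 0).
  apply is_lim_seq_ext with (fun k => dd k + hlo (INR k + 1)).
  { intros k. unfold dd, dlo, u. replace (INR (2 * k + 2) / 2) with (INR k + 1).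
    ring. rewrite plus_INR, mult_INR. simpl. field. }
  apply is_lim_seq_plus'; auto. apply hlo_lim.
Qed.

Lemma ln_pow4 k : ln (4 ^ k) = 2 * INR k * ln 2.
Proof.
  rewrite ln_pow by lra. replace 4 with (2 * 2) by ring. rewrite ln_mult by lra. ring.
Qed.

Lemma wallis_ln k : (1 <= k)%nat -> ln (PI * INR k * (w k * w k)) = 2 * mu (4 * k) - 4 * mu (2 * k).
Proof.
  intros Hk. assert (H1 : 1 <= INR k) by (apply (le_INR 1); auto).
  assert (HG2 := Gm_pos (2 * k)). assert (HG4 := Gm_pos (4 * k)).
  assert (HP := PI_RGT_0). assert (H4 : 0 < 4 ^ k) by (apply pow_lt; lra).
  assert (Hw : 0 < w k) by (unfold w; apply Rdiv_lt_0_compat; auto; apply Rmult_lt_0_compat; auto; nra).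
  rewrite ln_mult by nra. rewrite ln_mult by lra. rewrite ln_mult by lra.
  unfold w. rewrite ln_div by (auto; apply Rmult_lt_0_compat; auto; nra).
  rewrite ln_mult by (auto; nra). rewrite ln_mult by auto. rewrite ln_pow4.
  unfold mu. replace (INR (4 * k) / 2) with (2 * INR k) by (rewrite mult_INR; simpl; field).
  replace (INR (2 * k) / 2) with (INR k) by (rewrite mult_INR; simpl; field).
  rewrite !ln_mult by lra. field.
Qed.

Lemma lim_wallis : is_lim_seq (fun K => ln (PI * INR (S K) * (w (S K) * w (S K)))) 0.
Proof.
  apply squeeze0 with 1. intros K.
  assert (H1 : 1 <= INR (S K)) by (apply (le_INR 1); lia).
  destruct (wallis (S K) ltac:(lia)) as [Hw1 Hw2].
  set (v := PI * INR (S K) * (w (S K) * w (S K))) in *.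
  assert (Hv : 0 < v). { eapply Rlt_le_trans; [|exact Hw1]. apply Rdiv_lt_0_compat; lra. }
  assert (Hl1 : ln v <= 0). { rewrite <- ln_1. apply ln_le; lra. }
  assert (Hl2 := ln_ge_1_sub v Hv).
  assert (Hinv : / v <= (2 * INR (S K) + 1) / (2 * INR (S K))).
  { replace ((2 * INR (S K) + 1) / (2 * INR (S K))) with (/ (2 * INR (S K) / (2 * INR (S K) + 1))) by (field; lra).
    apply Rinv_le_contravar; auto. apply Rdiv_lt_0_compat; lra. }
  rewrite Rabs_left1 by lra. rewrite S_INR in *.
  assert ((2 * (INR K + 1) + 1) / (2 * (INR K + 1)) = 1 + 1 / (2 * (INR K + 1))) by (field; lra).
  assert (1 / (2 * (INR K + 1)) <= 1 / (INR K + 1)).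
  { apply Rmult_le_compat_l. lra. apply Rinv_le_contravar; lra. }
  lra.
Qed.

Lemma u_lim : is_lim_seq u 0.
Proof.
  destruct u_conv as [D HD].
  assert (Hs : is_lim_seq (fun K => u (2 * K + 1)) D).
  { apply (is_lim_seq_subseq u D (fun K => 2 * K + 1)%nat); auto. apply eventually_subseq. intros; lia. }
  assert (H2 := is_lim_seq_minus' _ _ _ _ (is_lim_seq_scal_l _ 2 _ Hs) (is_lim_seq_scal_l _ 4 _ HD)).
  simpl in H2.
  assert (H3 : is_lim_seq (fun K => ln (PI * INR (S K) * (w (S K) * w (S K)))) (2 * D - 4 * D)).
  { apply is_lim_seq_ext with (2 := H2). intros K. rewrite wallis_ln by lia.
    unfold u. replace (4 * S K)%nat with (2 * (2 * K + 1) + 2)%nat by lia.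
    replace (2 * S K)%nat with (2 * K + 2)%nat by lia. replace (K + (K + 0) + 1)%nat with (2 * K + 1)%nat by lia. ring. }
  assert (Heq : Finite (2 * D - 4 * D) = Finite 0).
  { rewrite <- (is_lim_seq_unique _ _ H3). apply is_lim_seq_unique, lim_wallis. }
  injection Heq. intros. replace 0 with D by lra. auto.
Qed.

Lemma ln_CS (a b c : R) : 0 < a -> 0 < b -> 0 < c -> b * b <= a * c -> 2 * ln b <= ln a + ln c.
Proof.
  intros Ha Hb Hc H. rewrite <- ln_mult by auto.
  replace (2 * ln b) with (ln (b * b)) by (rewrite ln_mult by auto; ring).
  apply ln_le; auto. nra.
Qed.

Lemma parity_gap M : Rabs (mu (S M) - mu (S (S M))) <= 1 / (INR M + 1).
Proof.
  pose proof (pos_INR M) as HM.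
  set (m := INR M + 2).
  set (A := ln (Gm (S M))). set (B := ln (Gm (S (S M)))).
  set (G0 := ln (Gm M)). set (G3 := ln (Gm (S (S (S M))))).
  set (lm := ln (m / 2)). set (lm1 := ln ((m - 1) / 2)). set (lp := ln ((m + 1) / 2)).
  assert (HB : B = lm + G0).
  { unfold B, lm, G0. rewrite Gm_rec, ln_mult. f_equal. f_equal. unfold m; field.
    pose proof (pos_INR M); lra. apply Gm_pos. }
  assert (HG3 : G3 = lp + A).
  { unfold G3, lp, A. rewrite Gm_rec, ln_mult. f_equal. f_equal. unfold m; rewrite S_INR; field.
    rewrite S_INR; lra. apply Gm_pos. }
  assert (C1 : 2 * A <= G0 + B) by (apply ln_CS; try apply Gm_pos; apply Gm_CS).
  assert (C2 : 2 * B <= A + G3) by (apply ln_CS; try apply Gm_pos; apply Gm_CS).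
  assert (Hd1 : lm - lm1 = ln (m / (m - 1))).
  { unfold lm, lm1. rewrite <- ln_div. f_equal. field. unfold m; lra.
    unfold m; lra. unfold m; lra. }
  assert (Hd2 : lm - lp = ln (m / (m + 1))).
  { unfold lm, lp. rewrite <- ln_div. f_equal. field. unfold m; lra.
    unfold m; lra. unfold m; lra. }
  assert (E1 := ln_le_sub1 (m / (m - 1)) ltac:(apply Rdiv_lt_0_compat; unfold m; lra)).
  assert (E2 := ln_ge_1_sub (m / (m - 1)) ltac:(apply Rdiv_lt_0_compat; unfold m; lra)).
  assert (E3 := ln_ge_1_sub (m / (m + 1)) ltac:(apply Rdiv_lt_0_compat; unfold m; lra)).
  rewrite <- Hd1 in E1, E2. rewrite <- Hd2 in E3.
  replace (m / (m - 1) - 1) with (1 / (m - 1)) in E1 by (field; unfold m; repeat split; lra).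
  replace (1 - / (m / (m - 1))) with (1 / m) in E2 by (field; unfold m; repeat split; lra).
  replace (1 - / (m / (m + 1))) with (- (1 / m)) in E3 by (field; unfold m; repeat split; lra).
  assert (Hdiff : mu (S M) - mu (S (S M)) = A - B - (m / 2) * lm1 + ((m + 1) / 2) * lm - 1 / 2).
  { unfold mu, A, B, lm, lm1. rewrite !S_INR. unfold m.
    replace ((INR M + 1) / 2) with ((INR M + 2 - 1) / 2) by field.
    replace ((INR M + 1 + 1) / 2) with ((INR M + 2) / 2) by field. field. }
  assert (Hm1 : m * (lm - lm1) <= m / (m - 1)).
  { replace (m / (m - 1)) with (m * (1 / (m - 1))) by (field; unfold m; repeat split; lra).
    apply Rmult_le_compat_l; [unfold m; lra | exact E1]. }
  assert (Hm2 : 1 <= m * (lm - lm1)).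
  { replace 1 with (m * (1 / m)) by (field; unfold m; repeat split; lra). apply Rmult_le_compat_l; [unfold m; lra | exact E2]. }
  assert (Hup : mu (S M) - mu (S (S M)) <= 1 / (2 * (m - 1))).
  { rewrite Hdiff.
    assert (m / (m - 1) = 1 + 1 / (m - 1)) by (field; unfold m; repeat split; lra).
    assert (1 / (2 * (m - 1)) = (1 / (m - 1)) / 2) by (field; unfold m; repeat split; lra).
    lra. }
  assert (Hlo : - (1 / (2 * m)) <= mu (S M) - mu (S (S M))).
  { rewrite Hdiff. assert (1 / (2 * m) = (1 / m) / 2) by (field; unfold m; repeat split; lra). lra. }
  assert (H1 : 1 / (2 * (m - 1)) <= 1 / (INR M + 1)).
  { unfold m. replace (INR M + 2 - 1) with (INR M + 1) by ring.
    apply Rmult_le_compat_l. lra. apply Rinv_le_contravar; lra. }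
  assert (H2 : 1 / (2 * m) <= 1 / (INR M + 1)).
  { unfold m. apply Rmult_le_compat_l. lra. apply Rinv_le_contravar; lra. }
  apply Rabs_le. lra.
Qed.

Lemma lim_mu j : (1 <= j)%nat -> is_lim_seq (fun N => mu (j + 2 * N)) 0.
Proof.
  intros Hj. destruct (Nat.Even_or_Odd j) as [[k Hk]|[k Hk]].
  - assert (H := proj1 (is_lim_seq_incr_n u (k - 1) 0) u_lim).
    apply is_lim_seq_ext with (2 := H). intros N. unfold u. f_equal. lia.
  - assert (H := proj1 (is_lim_seq_incr_n u k 0) u_lim).
    assert (Hg : is_lim_seq (fun N => mu (S (2 * (N + k))) - mu (S (S (2 * (N + k))))) 0).
    { apply squeeze0 with 1. intros N. eapply Rle_trans. apply parity_gap.
      rewrite mult_INR, plus_INR. pose proof (pos_INR N). pose proof (pos_INR k).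
      apply Rmult_le_compat_l. lra. apply Rinv_le_contravar; simpl; lra. }
    replace (Finite 0) with (Finite (0 + 0)) by (f_equal; ring).
    apply is_lim_seq_ext with (2 := is_lim_seq_plus' _ _ _ _ H Hg).
    intros N. unfold u. replace (2 * (N + k) + 2)%nat with (S (S (2 * (N + k)))) by lia.
    replace (j + 2 * N)%nat with (S (2 * (N + k))) by lia. ring.
Qed.

Lemma hlo_lim_j j : (1 <= j)%nat -> is_lim_seq (fun N => hlo (INR (j + 2 * N) / 2)) 0.
Proof.
  intros Hj. apply squeeze0 with 2. intros N.
  assert (Hx := INR_half_pos (j + 2 * N) ltac:(lia)).
  destruct (h_bounds _ Hx) as [H1 [H2 H3]]. rewrite Rabs_right by lra.
  eapply Rle_trans; [apply Rle_trans with (2 := H3); lra|].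
  assert (HN : INR N + 1 <= INR (j + 2 * N)).
  { rewrite plus_INR, mult_INR. apply (le_INR 1) in Hj. pose proof (pos_INR N). simpl in *. lra. }
  pose proof (pos_INR N).
  replace (1 / (INR (j + 2 * N) / 2)) with (2 / INR (j + 2 * N)) by (field; lra).
  apply Rmult_le_compat_l. lra. apply Rinv_le_contravar; lra.
Qed.

Lemma hhi_lim_j j : (1 <= j)%nat -> is_lim_seq (fun N => hhi (INR (j + 2 * N) / 2)) 0.
Proof.
  intros Hj. apply squeeze0 with 2. intros N.
  assert (Hx := INR_half_pos (j + 2 * N) ltac:(lia)).
  destruct (h_bounds _ Hx) as [H1 [H2 H3]]. rewrite Rabs_right by lra.
  eapply Rle_trans; [exact H3|].
  assert (HN : INR N + 1 <= INR (j + 2 * N)).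
  { rewrite plus_INR, mult_INR. apply (le_INR 1) in Hj. pose proof (pos_INR N). simpl in *. lra. }
  pose proof (pos_INR N).
  replace (1 / (INR (j + 2 * N) / 2)) with (2 / INR (j + 2 * N)) by (field; lra).
  apply Rmult_le_compat_l. lra. apply Rinv_le_contravar; lra.
Qed.

Lemma mu_bounds j : (1 <= j)%nat -> hlo (INR j / 2) <= mu j <= hhi (INR j / 2).
Proof.
  intros Hj. split.
  - assert (H := is_lim_seq_le (fun N => dlo (j + 2 * N)) (fun _ => dlo j) (0 - 0) (dlo j)
       (fun N => dlo_iter j N Hj)
       (is_lim_seq_minus' _ _ _ _ (lim_mu j Hj) (hlo_lim_j j Hj)) (is_lim_seq_const _)).
    simpl in H. unfold dlo in H. lra.
  - assert (H := is_lim_seq_le (fun N => ehi (j + 2 * N)) (fun _ => ehi j) (0 - 0) (ehi j)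
       (fun N => ehi_iter j N Hj)
       (is_lim_seq_minus' _ _ _ _ (hhi_lim_j j Hj) (lim_mu j Hj)) (is_lim_seq_const _)).
    simpl in H. unfold ehi in H. lra.
Qed.

Lemma pos_of_mul (e D N : R) : 0 < D -> e * D = N -> 0 < N -> 0 < e.
Proof.
  intros HD HeN HN. subst N. destruct (Rle_or_lt e 0); auto.
  assert (e * D <= 0) by (apply Rmult_le_0_r; lra). lra.
Qed.

Ltac horner_spos := apply Rplus_lt_le_0_compat; [lra | apply Rmult_le_pos; [lra | horner_pos]].

Lemma Flo x : 1 <= x ->
  0 < - (hhi (x / 2)) / x + hlo ((x + 1) / 2) / (x + 1) + 1 / (3 * x ^ 3).
Proof.
  intros Hx. set (t := x - 1). assert (Ht : 0 <= t) by (unfold t; lra).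
  apply pos_of_mul with (D := x ^ 6 * (x + 1) ^ 4 * 630)
    (N := 2054 + t * (9960 + t * (19027 + t * (18674 + t * (10008 + t * (2786 + t * (315))))))).
  - repeat apply Rmult_lt_0_compat; try apply pow_lt; lra.
  - unfold hhi, hlo, t. field. lra.
  - horner_spos.
Qed.

Lemma Fup x : 1 <= x ->
  0 < - (1 / (3 * x ^ 3)) + 1 / (2 * x ^ 4) + hlo (x / 2) / x - hhi ((x + 1) / 2) / (x + 1).
Proof.
  intros Hx. set (t := x - 1). assert (Ht : 0 <= t) by (unfold t; lra).
  apply pos_of_mul with (D := x ^ 4 * (x + 1) ^ 6 * 630)
    (N := 10904 + t * (27768 + t * (28198 + t * (14272 + t * (3603 + t * (364)))))).
  - repeat apply Rmult_lt_0_compat; try apply pow_lt; lra.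
  - unfold hhi, hlo, t. field. lra.
  - horner_spos.
Qed.

Lemma ln_Omega n : ln (Omega n) = INR n / 2 * ln PI - ln (Gm n).
Proof.
  unfold Omega. fold (Gm n). rewrite ln_div. unfold Rpower. rewrite ln_exp. ring.
  unfold Rpower; apply exp_pos. apply Gm_pos.
Qed.

Theorem theorem5 (n : nat) (Hn : (1 <= n)%nat) :
  Psi (INR n) - 1 / (3 * INR n ^ 3)
    < ln (Omega n) / INR n - ln (Omega (S n)) / INR (S n)
  /\ ln (Omega n) / INR n - ln (Omega (S n)) / INR (S n)
    < Psi (INR n) - 1 / (3 * INR n ^ 3) + 1 / (2 * INR n ^ 4).
Proof.
  assert (Hx : 1 <= INR n) by (apply (le_INR 1); auto).
  assert (Hid : ln (Omega n) / INR n - ln (Omega (S n)) / INR (S n) - Psi (INR n)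
                = - mu n / INR n + mu (S n) / (INR n + 1)).
  { rewrite !ln_Omega. unfold mu, Psi. rewrite !S_INR.
    field. lra. }
  destruct (mu_bounds n Hn) as [B1 B2].
  destruct (mu_bounds (S n) ltac:(lia)) as [B3 B4].
  rewrite S_INR in B3, B4.
  assert (HFlo := Flo (INR n) Hx). assert (HFup := Fup (INR n) Hx).
  assert (Hpos : 0 < / INR n) by (apply Rinv_0_lt_compat; lra).
  assert (Hpos1 : 0 < / (INR n + 1)) by (apply Rinv_0_lt_compat; lra).
  assert (M1 : mu n / INR n <= hhi (INR n / 2) / INR n) by (apply Rmult_le_compat_r; lra).
  assert (M2 : hlo (INR n / 2) / INR n <= mu n / INR n) by (apply Rmult_le_compat_r; lra).
  assert (M3 : mu (S n) / (INR n + 1) <= hhi ((INR n + 1) / 2) / (INR n + 1)) by (apply Rmult_le_compat_r; lra).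
  assert (M4 : hlo ((INR n + 1) / 2) / (INR n + 1) <= mu (S n) / (INR n + 1)) by (apply Rmult_le_compat_r; lra).
  assert (Hneg : - mu n / INR n = - (mu n / INR n)) by (field; lra).
  assert (Hneg2 : - hhi (INR n / 2) / INR n = - (hhi (INR n / 2) / INR n)) by (field; lra).
  split; lra.
Qed.
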